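(* Let $P$ and $Q$ be ultra-parallel planes in $\mathbb{H}^4$. Then $H_PH_Q$ is a hyperbolic isometry.
   Context: A plane is a $2$-dimensional totally geodesic subspace of $\mathbb{H}^4$. Two planes are ultra-parallel if their closures in $\mathbb{H}^4\cup\partial\mathbb{H}^4$ are disjoint. For a plane $P$, the half-turn $H_P$ is the composition of reflections in two orthogonal hyperplanes intersecting in $P$; it is the orientation preserving involution with fixed set $P$. *)

(* Defs.v *)
From HB Require Import structures.
From mathcomp Require Import all_boot all_order all_algebra.
From mathcomp Require Import reals.
Set Implicit Arguments. Unset Strict Implicit. Unset Printing Implicit Defensive.
Import Order.TTheory GRing.Theory Num.Theory.
Local Open Scope ring_scope.

(* Hyperboloid model of H^4 in Minkowski space R^{4,1} = 'rV[R]_5,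
   coordinate 0 is the time coordinate. *)
Section Hyp.
Variable R : realType.
Notation V := 'rV[R]_5.

Definition coord (x : V) (i : 'I_5) : R := x ord0 i.

Definition mink (x y : V) : R :=
  \sum_(i < 5) (if i == ord0 then -1 else 1) * coord x i * coord y i.

Definition Hyp (x : V) : Prop := mink x x = -1 /\ 0 < coord x ord0.

(* points of the ideal boundary dH^4 : future null rays, each represented
   by its unique vector with time coordinate 1 *)
Definition Ideal (v : V) : Prop := mink v v = 0 /\ coord v ord0 = 1.

(* Klein-model coordinates of a point of H^4 u dH^4 (ideal points are fixed) *)
Definition klein (x : V) : V := (coord x ord0)^-1 *: x.

(* closure of S (a subset of H^4) in the compactification H^4 u dH^4,
   computed in the Klein (closed ball) model *)
Definition hclosure (S : V -> Prop) (p : V) : Prop :=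
  (Hyp p \/ Ideal p) /\
  forall eps : R, 0 < eps ->
    exists x, S x /\ forall i : 'I_5, `|coord (klein x) i - coord (klein p) i| < eps.

(* a plane: intersection of H^4 with a 3-dimensional linear subspace
   meeting H^4 (a 2-dim totally geodesic subspace) *)
Definition is_plane (P : V -> Prop) : Prop :=
  exists W : 'M[R]_(3, 5), \rank W = 3%N /\
    (forall x, P x <-> (Hyp x /\ (x <= W)%MS)) /\ exists x, P x.

Definition ultra_parallel (P Q : V -> Prop) : Prop :=
  forall p, ~ (hclosure P p /\ hclosure Q p).

Definition spacelike (n : V) : Prop := 0 < mink n n.
Definition hyperplane (n : V) (x : V) : Prop := Hyp x /\ mink x n = 0.

Definition refl (n : V) (x : V) : V := x - (2 * mink x n / mink n n) *: n.

Definition half_turn (P : V -> Prop) (f : V -> V) : Prop :=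
  exists n1 n2 : V, spacelike n1 /\ spacelike n2 /\ mink n1 n2 = 0 /\
    (forall x, P x <-> (hyperplane n1 x /\ hyperplane n2 x)) /\
    (forall x, f x = refl n1 (refl n2 x)).

Definition fixes_ideal (f : V -> V) (v : V) : Prop :=
  exists c : R, 0 < c /\ f v = c *: v.

Definition hyperbolic_isom (f : V -> V) : Prop :=
  (forall x, Hyp x -> f x <> x) /\
  exists u v, Ideal u /\ Ideal v /\ u <> v /\ fixes_ideal f u /\ fixes_ideal f v /\
    forall w, Ideal w -> fixes_ideal f w -> w = u \/ w = v.
End Hyp.

(* Main.v *)
Require Import Defs.
From HB Require Import structures.
From mathcomp Require Import all_boot all_order all_algebra.
From mathcomp Require Import reals ring lra.
Import Order.TTheory GRing.Theory Num.Theory.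
Local Open Scope ring_scope.
Set Implicit Arguments. Unset Strict Implicit. Unset Printing Implicit Defensive.
Module Aux.
Section S.
Variable R : realType.
Local Notation V := 'rV[R]_5.
Definition o1 : 'I_5 := @Ordinal 5 1 isT.
Definition o2 : 'I_5 := @Ordinal 5 2 isT.
Definition o3 : 'I_5 := @Ordinal 5 3 isT.
Definition o4 : 'I_5 := @Ordinal 5 4 isT.
Local Notation "x ^^ i" := (x ord0 i) (at level 8).
Implicit Types (x y z r t : V) (a : R).

Lemma minkE (x y : V) : mink x y = - (x^^ord0 * y^^ord0) + x^^o1 * y^^o1
  + x^^o2 * y^^o2 + x^^o3 * y^^o3 + x^^o4 * y^^o4.
Proof.
rewrite /mink /coord !big_ord_recl big_ord0 /=.
have -> : lift (ord0 : 'I_5) (lift (ord0 : 'I_4) (lift (ord0 : 'I_3) (lift (ord0 : 'I_2) (ord0 : 'I_1)))) = o4 by apply: val_inj.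
have -> : lift (ord0 : 'I_5) (lift (ord0 : 'I_4) (lift (ord0 : 'I_3) (ord0 : 'I_2))) = o3 by apply: val_inj.
have -> : lift (ord0 : 'I_5) (lift (ord0 : 'I_4) (ord0 : 'I_3)) = o2 by apply: val_inj.
have -> : lift (ord0 : 'I_5) (ord0 : 'I_4) = o1 by apply: val_inj.
rewrite /Defs.coord; ring.
Qed.

Lemma rowP5 (x y : V) : x^^ord0 = y^^ord0 -> x^^o1 = y^^o1 -> x^^o2 = y^^o2 ->
  x^^o3 = y^^o3 -> x^^o4 = y^^o4 -> x = y.
Proof.
move=> h0 h1 h2 h3 h4; apply/rowP => i.
case: i => [[|[|[|[|[|//]]]]] Hi].
- by have -> : Ordinal Hi = ord0 :> 'I_5 by apply: val_inj.
- by have -> : Ordinal Hi = o1 by apply: val_inj.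
- by have -> : Ordinal Hi = o2 by apply: val_inj.
- by have -> : Ordinal Hi = o3 by apply: val_inj.
- by have -> : Ordinal Hi = o4 by apply: val_inj.
Qed.

Lemma minkC x y : mink x y = mink y x.
Proof. rewrite !minkE; ring. Qed.
Lemma minkDl x y z : mink (x + y) z = mink x z + mink y z.
Proof. rewrite !minkE !mxE; ring. Qed.
Lemma minkDr x y z : mink z (x + y) = mink z x + mink z y.
Proof. rewrite !minkE !mxE; ring. Qed.
Lemma minkZl a x z : mink (a *: x) z = a * mink x z.
Proof. rewrite !minkE !mxE; ring. Qed.
Lemma minkZr a x z : mink z (a *: x) = a * mink z x.
Proof. rewrite !minkE !mxE; ring. Qed.
Lemma minkNl x z : mink (- x) z = - mink x z.
Proof. rewrite !minkE !mxE; ring. Qed.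
Lemma minkNr x z : mink z (- x) = - mink z x.
Proof. rewrite !minkE !mxE; ring. Qed.
Lemma minkBl x y z : mink (x - y) z = mink x z - mink y z.
Proof. by rewrite minkDl minkNl. Qed.
Lemma minkBr x y z : mink z (x - y) = mink z x - mink z y.
Proof. by rewrite minkDr minkNr. Qed.
Lemma mink0l z : mink 0 z = 0.
Proof. rewrite !minkE !mxE; ring. Qed.
Lemma mink0r z : mink z 0 = 0.
Proof. rewrite !minkE !mxE; ring. Qed.

Definition minkS := (minkDl, minkDr, minkZl, minkZr, minkNl, minkNr, minkBl, minkBr, mink0l, mink0r).

Lemma null0 (x : V) : mink x x <= 0 -> x^^ord0 = 0 -> x = 0.
Proof.
rewrite minkE => h h0; rewrite h0 in h.
have a1 : x^^o1 ^+ 2 = 0 by nra.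
have a2 : x^^o2 ^+ 2 = 0 by nra.
have a3 : x^^o3 ^+ 2 = 0 by nra.
have a4 : x^^o4 ^+ 2 = 0 by nra.
move/eqP: a1; rewrite sqrf_eq0 => /eqP a1.
move/eqP: a2; rewrite sqrf_eq0 => /eqP a2.
move/eqP: a3; rewrite sqrf_eq0 => /eqP a3.
move/eqP: a4; rewrite sqrf_eq0 => /eqP a4.
by apply: rowP5; rewrite ?mxE.
Qed.

Lemma time_neq0 (x : V) : mink x x < 0 -> x^^ord0 != 0.
Proof.
rewrite minkE => h; apply/eqP => h0; rewrite h0 in h; nra.
Qed.

Lemma null_time (x : V) : mink x x <= 0 -> x != 0 -> x^^ord0 != 0.
Proof. by move=> h; apply: contra => /eqP/(null0 h)/eqP. Qed.

Lemma perp_time (t r : V) : mink t t < 0 -> mink r t = 0 ->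
  0 <= mink r r /\ (mink r r = 0 -> r = 0).
Proof.
rewrite !minkE => ht hrt.
set t0 := t^^ord0 in ht hrt *; set t1 := t^^o1 in ht hrt *; set t2 := t^^o2 in ht hrt *.
set t3 := t^^o3 in ht hrt *; set t4 := t^^o4 in ht hrt *.
set r0 := r^^ord0 in hrt *; set r1 := r^^o1 in hrt *; set r2 := r^^o2 in hrt *.
set r3 := r^^o3 in hrt *; set r4 := r^^o4 in hrt *.
set T := t1^+2 + t2^+2 + t3^+2 + t4^+2.
set Q := r1^+2 + r2^+2 + r3^+2 + r4^+2.
have hT : T < t0 ^+2 by rewrite /T; nra.
have hT0 : 0 <= T by rewrite /T; nra.
have hQ0 : 0 <= Q by rewrite /Q; nra.
have eq0 : t0 * r0 = t1*r1 + t2*r2 + t3*r3 + t4*r4 by lra.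
have lag : T * Q - (t1*r1 + t2*r2 + t3*r3 + t4*r4)^+2 =
  (t1*r2-t2*r1)^+2 + (t1*r3-t3*r1)^+2 + (t1*r4-t4*r1)^+2 + (t2*r3-t3*r2)^+2
  + (t2*r4-t4*r2)^+2 + (t3*r4-t4*r3)^+2 by rewrite /T /Q; ring.
have cs : (t0 * r0)^+2 <= T * Q.
  by rewrite eq0 -subr_ge0 lag ?addr_ge0 ?sqr_ge0.
have key : r0 ^+ 2 <= Q.
  rewrite leNgt; apply/negP => hlt.
  have : T * Q <= T * r0^+2 by apply: ler_wpM2l => //; exact: ltW.
  have : T * r0 ^+ 2 < t0^+2 * r0^+2.
    rewrite ltr_pM2r //; apply: le_lt_trans hlt; exact: hQ0.
  nra.
have e : - (r0 * r0) + r1 * r1 + r2 * r2 + r3 * r3 + r4 * r4 = Q - r0^+2 by rewrite /Q; ring.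
rewrite e subr_ge0; split => // hq.
have hq' : Q = r0 ^+ 2 by lra.
have : r0 = 0.
  have : (t0^+2 - T) * r0^+2 <= 0 by nra.
  move=> h; apply/eqP; rewrite -sqrf_eq0; apply/eqP.
  have hp : 0 < t0^+2 - T by lra.
  have : r0 ^+2 <= 0 by rewrite -(pmulr_rle0 _ hp).
  nra.
move=> r00; rewrite r00 expr0n /= in hq'.
have a1 : r1 ^+ 2 = 0 by rewrite /Q in hq'; nra.
have a2 : r2 ^+ 2 = 0 by rewrite /Q in hq'; nra.
have a3 : r3 ^+ 2 = 0 by rewrite /Q in hq'; nra.
have a4 : r4 ^+ 2 = 0 by rewrite /Q in hq'; nra.
move/eqP: a1; rewrite sqrf_eq0 => /eqP a1.
move/eqP: a2; rewrite sqrf_eq0 => /eqP a2.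
move/eqP: a3; rewrite sqrf_eq0 => /eqP a3.
move/eqP: a4; rewrite sqrf_eq0 => /eqP a4.
by apply: rowP5; rewrite ?mxE.
Qed.

Definition pr (e1 e2 x : V) : V := mink x e1 *: e1 + mink x e2 *: e2.
Definition ht (e1 e2 x : V) : V := x - 2 *: pr e1 e2 x.

Lemma prD e1 e2 x y : pr e1 e2 (x + y) = pr e1 e2 x + pr e1 e2 y.
Proof. rewrite /pr !minkDl !scalerDl; by rewrite addrACA. Qed.
Lemma prZ e1 e2 a x : pr e1 e2 (a *: x) = a *: pr e1 e2 x.
Proof. by rewrite /pr !minkZl scalerDr !scalerA. Qed.
Lemma htD e1 e2 x y : ht e1 e2 (x + y) = ht e1 e2 x + ht e1 e2 y.
Proof. by rewrite /ht prD scalerDr opprD addrACA. Qed.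
Lemma htZ e1 e2 a x : ht e1 e2 (a *: x) = a *: ht e1 e2 x.
Proof. by rewrite /ht prZ scalerBr !scalerA mulrC. Qed.
Lemma htN e1 e2 x : ht e1 e2 (- x) = - ht e1 e2 x.
Proof. by rewrite -scaleN1r htZ scaleN1r. Qed.
Lemma htB e1 e2 x y : ht e1 e2 (x - y) = ht e1 e2 x - ht e1 e2 y.
Proof. by rewrite htD htN. Qed.

Section Ortho.
Variables e1 e2 : V.
Hypothesis he1 : mink e1 e1 = 1.
Hypothesis he2 : mink e2 e2 = 1.
Hypothesis he12 : mink e1 e2 = 0.
Let he21 : mink e2 e1 = 0. Proof. by rewrite minkC. Qed.

Lemma mink_pr_e1 x : mink (pr e1 e2 x) e1 = mink x e1.
Proof. by rewrite /pr !minkS he1 he21; ring. Qed.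
Lemma mink_pr_e2 x : mink (pr e1 e2 x) e2 = mink x e2.
Proof. by rewrite /pr !minkS he2 he12; ring. Qed.
Lemma mink_ht_e1 x : mink (ht e1 e2 x) e1 = - mink x e1.
Proof. rewrite /ht /pr !minkS he1 he21; ring. Qed.
Lemma mink_ht_e2 x : mink (ht e1 e2 x) e2 = - mink x e2.
Proof. rewrite /ht /pr !minkS he2 he12; ring. Qed.
Lemma pr_ht x : pr e1 e2 (ht e1 e2 x) = - pr e1 e2 x.
Proof. by rewrite {1}/pr mink_ht_e1 mink_ht_e2 !scaleNr opprD. Qed.
Lemma ht_inv x : ht e1 e2 (ht e1 e2 x) = x.
Proof. by rewrite {1}/ht pr_ht scalerN opprK /ht subrK. Qed.
Lemma mink_pr_r x y : mink x (pr e1 e2 y) = mink y e1 * mink x e1 + mink y e2 * mink x e2.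
Proof. by rewrite /pr !minkS. Qed.
Lemma mink_pr_l x y : mink (pr e1 e2 y) x = mink y e1 * mink x e1 + mink y e2 * mink x e2.
Proof. by rewrite minkC mink_pr_r. Qed.
Lemma mink_pr_pr x y : mink (pr e1 e2 x) (pr e1 e2 y) = mink x e1 * mink y e1 + mink x e2 * mink y e2.
Proof. rewrite mink_pr_r mink_pr_e1 mink_pr_e2; ring. Qed.
Lemma ht_iso x y : mink (ht e1 e2 x) (ht e1 e2 y) = mink x y.
Proof.
rewrite /ht !(minkBl, minkBr, minkZl, minkZr) mink_pr_pr mink_pr_l mink_pr_r.
rewrite (minkC y e1) (minkC y e2); ring.
Qed.
End Ortho.

Lemma half_turn_norm (P : V -> Prop) f : half_turn P f -> exists e1 e2 : V,
  [/\ mink e1 e1 = 1, mink e2 e2 = 1, mink e1 e2 = 0,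
   (forall x, P x <-> (Hyp x /\ mink x e1 = 0 /\ mink x e2 = 0)) &
   (forall x, f x = ht e1 e2 x)].
Proof.
case=> n1 [n2 [sp1 [sp2 [h12 [hP hf]]]]].
rewrite /spacelike in sp1 sp2.
set p1 := mink n1 n1 in sp1; set p2 := mink n2 n2 in sp2.
set s1 := Num.sqrt p1; set s2 := Num.sqrt p2.
have hs1 : 0 < s1 by rewrite sqrtr_gt0.
have hs2 : 0 < s2 by rewrite sqrtr_gt0.
have hp1 : p1 = s1 ^+ 2 by rewrite sqr_sqrtr // ltW.
have hp2 : p2 = s2 ^+ 2 by rewrite sqr_sqrtr // ltW.
have h21 : mink n2 n1 = 0 by rewrite minkC.
have s1n : s1 != 0 by rewrite gt_eqF.
have s2n : s2 != 0 by rewrite gt_eqF.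
exists (s1^-1 *: n1), (s2^-1 *: n2); split.
- by rewrite !minkS -/p1 hp1; field.
- by rewrite !minkS -/p2 hp2; field.
- by rewrite !minkS h12 !mulr0.
- move=> x; rewrite hP /hyperplane !minkZr.
  split; first by case=> -[hx ->] [_ ->]; rewrite !mulr0.
  case=> hx [/eqP a /eqP b].
  move: a b; rewrite !mulf_eq0 !invr_eq0 (negPf s1n) (negPf s2n) /= => /eqP a /eqP b.
  by [].
- move=> x; rewrite hf /refl /ht /pr.
  apply/rowP => i; rewrite !mxE !minkS h21 -/p1 -/p2 hp1 hp2; field.
  by rewrite s1n s2n.
Qed.

Lemma solve2 (k11 k12 k22 c1 c2 : R) :
 (forall b1 b2, 0 <= b1*(k11*b1 + k12*b2) + b2*(k12*b1 + k22*b2)) ->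
 (forall g1 g2, k11*g1 + k12*g2 = 0 -> k12*g1 + k22*g2 = 0 -> c1*g1 + c2*g2 = 0) ->
 exists b1 b2, k11*b1 + k12*b2 = c1 /\ k12*b1 + k22*b2 = c2.
Proof.
move=> psd ker.
have h11 : 0 <= k11 by have := psd 1 0; lra.
have h22 : 0 <= k22 by have := psd 0 1; lra.
set D := k11 * k22 - k12 * k12.
have [D0|Dn] := eqVneq D 0.
- have [T0|Tn] := eqVneq (k11 + k22) 0.
  + have a11 : k11 = 0 by lra.
    have a22 : k22 = 0 by lra.
    have a12 : k12 = 0.
      apply/eqP; rewrite -sqrf_eq0; apply/eqP; rewrite /D a11 in D0; nra.
    have c10 : c1 = 0 by have := ker 1 0; rewrite a11 a12 a22; lra.
    have c20 : c2 = 0 by have := ker 0 1; rewrite a11 a12 a22; lra.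
    exists 0, 0; rewrite c10 c20; split; ring.
  + have e1 := ker k22 (- k12).
    have e2 := ker (- k12) k11.
    have q1 : c1 * k22 + c2 * (- k12) = 0 by apply: e1; rewrite /D in D0; lra.
    have q2 : c1 * (- k12) + c2 * k11 = 0 by apply: e2; rewrite /D in D0; lra.
    exists (c1 / (k11 + k22)), (c2 / (k11 + k22)); split.
    * apply: (mulIf Tn); rewrite mulrDl -!mulrA !mulVf //; lra.
    * apply: (mulIf Tn); rewrite mulrDl -!mulrA !mulVf //; lra.
- exists ((k22 * c1 - k12 * c2) / D), ((k11 * c2 - k12 * c1) / D); split.
  + apply: (mulIf Dn); rewrite mulrDl -!mulrA !mulVf // /D; ring.
  + apply: (mulIf Dn); rewrite mulrDl -!mulrA !mulVf // /D; ring.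
Qed.

Lemma eig2 (s11 s12 s22 : R) :
  let l := (s11 + s22) / 2 + Num.sqrt (((s11 - s22) / 2) ^+ 2 + s12 ^+ 2) in
  (forall b1 b2, b1*(s11*b1 + s12*b2) + b2*(s12*b1 + s22*b2) <= l * (b1^+2 + b2^+2)) /\
  exists g1 g2, 0 < g1^+2 + g2^+2 /\ s11*g1 + s12*g2 = l*g1 /\ s12*g1 + s22*g2 = l*g2.
Proof.
move=> l.
set d := (s11 - s22) / 2.
set q := Num.sqrt (d ^+ 2 + s12 ^+ 2).
have q0 : 0 <= q by rewrite sqrtr_ge0.
have q2 : q ^+ 2 = d ^+ 2 + s12 ^+ 2 by rewrite sqr_sqrtr // addr_ge0 ?sqr_ge0.
have hl : l = s11 - d + q by rewrite /l -/d -/q /d; field.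
have hl2 : l = s22 + d + q by rewrite /l -/d -/q /d; field.
have qd1 : 0 <= q - d by nra.
have qd2 : 0 <= q + d by nra.
have qq : (q - d) * (q + d) = s12 ^+ 2 by nra.
split.
- move=> b1 b2.
  rewrite -subr_ge0.
  have -> : l * (b1 ^+ 2 + b2 ^+ 2) - (b1 * (s11 * b1 + s12 * b2) + b2 * (s12 * b1 + s22 * b2))
     = (q - d) * b1^+2 - 2 * s12 * b1 * b2 + (q + d) * b2^+2.
    rewrite hl; have -> : s22 = s11 - 2 * d by rewrite /d; field. ring.
  have [P0|Pp] := eqVneq (q - d) 0.
  + have s0 : s12 = 0 by apply/eqP; rewrite -sqrf_eq0 -qq P0 mul0r.
    rewrite P0 s0; nra.
  + have Pp' : 0 < q - d by rewrite lt_def Pp.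
    have : 0 <= (q - d) * ((q - d) * b1^+2 - 2 * s12 * b1 * b2 + (q + d) * b2^+2).
      have -> : (q - d) * ((q - d) * b1^+2 - 2 * s12 * b1 * b2 + (q + d) * b2^+2)
        = ((q - d) * b1 - s12 * b2) ^+ 2 + ((q-d)*(q+d) - s12^+2) * b2^+2 by ring.
      by rewrite qq subrr mul0r addr0 sqr_ge0.
    by rewrite pmulr_rge0.
- have [/andP [/eqP s0 /eqP P0]|hn] := boolP ((s12 == 0) && (q - d == 0)).
  + exists 1, 0; split; first by lra.
    rewrite hl s0; split; nra.
  + exists s12, (q - d); split.
    * move: hn; rewrite negb_and => /orP [] hn.
      - have : 0 < s12 ^+ 2 by rewrite exprn_even_gt0 //.
        nra.
      - have : 0 < (q - d) ^+ 2 by rewrite exprn_even_gt0 //.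
        nra.
    * split.
      - rewrite hl; ring.
      - rewrite hl2; nra.
Qed.

Section Uniq.
Variable T : V -> V.
Hypothesis TD : forall x y, T (x + y) = T x + T y.
Hypothesis TZ : forall a x, T (a *: x) = a *: T x.
Hypothesis Tiso : forall x y, mink (T x) (T y) = mink x y.

Lemma TB x y : T (x - y) = T x - T y.
Proof. by rewrite TD -scaleN1r TZ scaleN1r. Qed.

Lemma uniq_side x1 x2 c1 c2 W c :
 mink x1 x1 = 0 -> mink x2 x2 = 0 -> mink x1 x2 < 0 -> T x1 = c1 *: x1 -> T x2 = c2 *: x2 ->
 c1 * c2 = 1 -> 0 < c1 -> c1 != 1 -> Ideal W -> T W = c *: W -> 0 < c ->
 mink W x2 != 0 -> W = (x1^^ord0)^-1 *: x1.
Proof.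
move=> n1 n2 n12 T1 T2 cc c1p c1n [WW W0] TW cp Wx2.
have cc2 : c * c2 = 1.
  have := Tiso W x2; rewrite TW T2 minkZl minkZr mulrA => /eqP.
  rewrite -{2}(mul1r (mink W x2)) (can_eq (mulfK Wx2)) => /eqP.
  by rewrite mulrC.
have cc1 : c = c1 by rewrite -[c]mulr1 -cc mulrCA cc2 mulr1.
have Wx1 : mink W x1 = 0.
  have := Tiso W x1; rewrite TW T1 minkZl minkZr mulrA cc1 => e.
  have : (c1 * c1 - 1) * mink W x1 = 0 by rewrite mulrBl e mul1r subrr.
  move/eqP; rewrite mulf_eq0 => /orP [|/eqP //].
  rewrite subr_eq0 => /eqP h; exfalso.
  have : (c1 - 1) * (c1 + 1) = 0 by rewrite mulrDr mulr1 mulrBl mul1r h; ring.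
  move/eqP; rewrite mulf_eq0 => /orP [|]; first by rewrite subr_eq0 (negPf c1n).
  move/eqP => e2; lra.
have x12n : mink x1 x2 != 0 by rewrite lt_eqF.
set a := mink W x2 / mink x1 x2.
set r := W - a *: x1.
have r1 : mink r x1 = 0 by rewrite /r minkBl minkZl Wx1 n1 mulr0 subrr.
have r2 : mink r x2 = 0 by rewrite /r minkBl minkZl /a mulfVK // subrr.
have tt : mink (x1 + x2) (x1 + x2) < 0.
  rewrite !minkS n1 n2 (minkC x2 x1); lra.
have rt : mink r (x1 + x2) = 0 by rewrite minkDr r1 r2 addr0.
have Tr : T r = c1 *: r by rewrite /r TB TZ TW T1 cc1 scalerA mulrC -scalerA scalerBr.
have rr : mink r r = 0.
  have := Tiso r r; rewrite Tr minkZl minkZr mulrA => e.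
  have : (c1 * c1 - 1) * mink r r = 0 by rewrite mulrBl e mul1r subrr.
  move/eqP; rewrite mulf_eq0 => /orP [|/eqP //].
  rewrite subr_eq0 => /eqP h; exfalso.
  have : (c1 - 1) * (c1 + 1) = 0 by rewrite mulrDr mulr1 mulrBl mul1r h; ring.
  move/eqP; rewrite mulf_eq0 => /orP [|]; first by rewrite subr_eq0 (negPf c1n).
  move/eqP => e2; lra.
have r0 : r = 0 by case: (perp_time tt rt) => _; apply.
have Wa : W = a *: x1 by apply/eqP; rewrite -subr_eq0 -/r r0.
have : a * x1^^ord0 = 1 by rewrite -W0 Wa /Defs.coord mxE.
move=> ha; rewrite Wa; congr (_ *: _).
have xn : x1^^ord0 != 0 by apply/eqP => e; move: ha; rewrite e mulr0 => /eqP; rewrite eq_sym oner_eq0.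
by apply: (mulIf xn); rewrite ha mulVf.
Qed.

Lemma uniq_gen x1 x2 c1 c2 W c :
 mink x1 x1 = 0 -> mink x2 x2 = 0 -> mink x1 x2 < 0 -> T x1 = c1 *: x1 -> T x2 = c2 *: x2 ->
 c1 * c2 = 1 -> 0 < c1 -> c1 != 1 -> Ideal W -> T W = c *: W -> 0 < c ->
 W = (x1^^ord0)^-1 *: x1 \/ W = (x2^^ord0)^-1 *: x2.
Proof.
move=> n1 n2 n12 T1 T2 cc c1p c1n IW TW cp.
have [Wx2|Wx2] := eqVneq (mink W x2) 0; last by left; exact: (uniq_side n1 n2 n12 T1 T2 cc c1p c1n IW TW cp Wx2).
have c2p : 0 < c2.
  have : 0 < c1 * c2 by rewrite cc.
  by rewrite pmulr_rgt0.
have c2n : c2 != 1 by apply/eqP => e; move: cc; rewrite e mulr1 => e'; move: c1n; rewrite e' eqxx.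
have [Wx1|Wx1] := eqVneq (mink W x1) 0; last first.
  right; apply: (uniq_side n2 n1 _ T2 T1 _ c2p c2n IW TW cp Wx1).
    by rewrite minkC.
  by rewrite mulrC.
exfalso; case: IW => WW W0.
have tt : mink (x1 + x2) (x1 + x2) < 0.
  rewrite !minkS n1 n2 (minkC x2 x1); lra.
have rt : mink W (x1 + x2) = 0 by rewrite minkDr Wx1 Wx2 addr0.
have := (perp_time tt rt).2 WW => W00.
by move: W0; rewrite W00 /Defs.coord mxE => /eqP; rewrite eq_sym oner_eq0.
Qed.
End Uniq.

Section Main.
Variables e1 e2 f1 f2 h : V.
Hypothesis he1 : mink e1 e1 = 1.
Hypothesis he2 : mink e2 e2 = 1.
Hypothesis he12 : mink e1 e2 = 0.
Hypothesis hf1 : mink f1 f1 = 1.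
Hypothesis hf2 : mink f2 f2 = 1.
Hypothesis hf12 : mink f1 f2 = 0.
Hypothesis hh : mink h h = -1.
Hypothesis hh1 : mink h e1 = 0.
Hypothesis hh2 : mink h e2 = 0.
Hypothesis noL : forall v, mink v e1 = 0 -> mink v e2 = 0 -> mink v f1 = 0 ->
  mink v f2 = 0 -> mink v v <= 0 -> v = 0.

Let he21 : mink e2 e1 = 0. Proof. by rewrite minkC. Qed.
Let hf21 : mink f2 f1 = 0. Proof. by rewrite minkC. Qed.
Let fe11 : mink f1 e1 = mink e1 f1. Proof. by rewrite minkC. Qed.
Let fe12 : mink f2 e1 = mink e1 f2. Proof. by rewrite minkC. Qed.
Let fe21 : mink f1 e2 = mink e2 f1. Proof. by rewrite minkC. Qed.
Let fe22 : mink f2 e2 = mink e2 f2. Proof. by rewrite minkC. Qed.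
Let eh1 : mink e1 h = 0. Proof. by rewrite minkC. Qed.
Let eh2 : mink e2 h = 0. Proof. by rewrite minkC. Qed.
Let fh1 : mink f1 h = mink h f1. Proof. by rewrite minkC. Qed.
Let fh2 : mink f2 h = mink h f2. Proof. by rewrite minkC. Qed.

Ltac ex := rewrite ?minkS ?he1 ?he2 ?he12 ?he21 ?hf1 ?hf2 ?hf12 ?hf21 ?fe11 ?fe12 ?fe21 ?fe22
  ?hh ?hh1 ?hh2 ?eh1 ?eh2 ?fh1 ?fh2.

Definition TT x := ht e1 e2 (ht f1 f2 x).

Lemma TTD x y : TT (x + y) = TT x + TT y.
Proof. by rewrite /TT !htD. Qed.
Lemma TTZ a x : TT (a *: x) = a *: TT x.
Proof. by rewrite /TT !htZ. Qed.
Lemma TTiso x y : mink (TT x) (TT y) = mink x y.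
Proof. by rewrite /TT (ht_iso he1 he2 he12) (ht_iso hf1 hf2 hf12). Qed.

Lemma no_fix x : Hyp x -> TT x <> x.
Proof.
case=> hx _ hT.
have e : ht e1 e2 (TT x) = ht f1 f2 x by rewrite /TT (ht_inv he1 he2 he12).
rewrite hT /ht in e.
have ep : pr e1 e2 x = pr f1 f2 x.
  move/addrI/oppr_inj: e => e.
  by apply: (scalerI _ e); rewrite pnatr_eq0.
set p := x - pr e1 e2 x.
have p0 : p = 0.
  apply: noL.
  - by rewrite /p minkBl (mink_pr_e1 he1 he12) subrr.
  - by rewrite /p minkBl (mink_pr_e2 he2 he12) subrr.
  - by rewrite /p minkBl ep (mink_pr_e1 hf1 hf12) subrr.
  - by rewrite /p minkBl ep (mink_pr_e2 hf2 hf12) subrr.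
  - rewrite /p minkBl !minkBr (mink_pr_pr he1 he2 he12) (mink_pr_l e1 e2) (mink_pr_r e1 e2) hx.
    nra.
have : mink x x = mink (pr e1 e2 x) (pr e1 e2 x).
  by move/eqP: p0; rewrite subr_eq0 => /eqP <-.
rewrite (mink_pr_pr he1 he2 he12) hx; nra.
Qed.

Local Notation g11 := (mink e1 f1).
Local Notation g12 := (mink e1 f2).
Local Notation g21 := (mink e2 f1).
Local Notation g22 := (mink e2 f2).
Definition s11 := g11^+2 + g21^+2.
Definition s12 := g11 * g12 + g21 * g22.
Definition s22 := g12^+2 + g22^+2.

Lemma big_eig : exists l g1 g2, 1 < l /\ 0 < g1^+2 + g2^+2 /\
   s11*g1 + s12*g2 = l*g1 /\ s12*g1 + s22*g2 = l*g2.
Proof.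
have [bnd [g1 [g2 [gp [q1 q2]]]]] := eig2 s11 s12 s22.
set l := (_ + _) in bnd q1 q2.
have [hl|hl] := ltP 1 l; first by exists l, g1, g2.
exfalso.
set c1 := mink h f1; set c2 := mink h f2.
have psd : forall b1 b2, 0 <= b1*((1 - s11)*b1 + (- s12)*b2) + b2*((- s12)*b1 + (1 - s22)*b2).
  move=> b1 b2; have := bnd b1 b2.
  have : 0 <= b1^+2 + b2^+2 by rewrite addr_ge0 ?sqr_ge0.
  nra.
have ker : forall w1 w2, (1 - s11)*w1 + (- s12)*w2 = 0 -> (- s12)*w1 + (1 - s22)*w2 = 0 ->
    c1*w1 + c2*w2 = 0.
  move=> w1 w2 k1 k2.
  set z := (w1 *: f1 + w2 *: f2) - ((g11 * w1 + g12 * w2) *: e1 + (g21 * w1 + g22 * w2) *: e2).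
  have z0 : z = 0.
    apply: noL; rewrite /z; ex.
    - ring.
    - ring.
    - move: k1; rewrite /s11 /s12; lra.
    - move: k2; rewrite /s12 /s22; lra.
      apply: (le_trans (_ : _ <= w1 * ((1 - s11)*w1 + (- s12)*w2) + w2 * ((- s12)*w1 + (1 - s22)*w2))).
        rewrite le_eqVlt; apply/orP; left; apply/eqP; rewrite /s11 /s12 /s22; ring.
      by rewrite k1 k2 !mulr0 addr0.
  have := congr1 (mink h) z0; rewrite mink0r /z; ex => <-; rewrite -/c1 -/c2; ring.
have [b1 [b2 [k1 k2]]] := solve2 psd ker.
set v := h + ((g11 * b1 + g12 * b2) *: e1 + (g21 * b1 + g22 * b2) *: e2) - (b1 *: f1 + b2 *: f2).
have vv : mink v v <= -1.
  rewrite /v; ex; rewrite -/c1 -/c2 -k1 -k2.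
  have := psd b1 b2. rewrite /s11 /s12 /s22. nra.
have v0 : v = 0.
  apply: noL; rewrite /v; ex; rewrite -/c1 -/c2.
  - ring.
  - ring.
  - rewrite -k1 /s11 /s12; ring.
  - rewrite -k2 /s12 /s22; ring.
  have := psd b1 b2. have := congr1 (fun s0 : R => b1 * s0) k1. have := congr1 (fun s0 : R => b2 * s0) k2. rewrite /s11 /s12 /s22 /=. nra.
by move: vv; rewrite v0 mink0r; lra.
Qed.

Lemma main_hyp : hyperbolic_isom TT.
Proof.
split; first exact: no_fix.
have [l [g1 [g2 [hl [gp [q1 q2]]]]]] := big_eig.
rewrite /s11 /s12 /s22 in q1 q2.
set a := g1^+2 + g2^+2 in gp.
set u := g1 *: f1 + g2 *: f2.
set w := (g11 * g1 + g12 * g2) *: e1 + (g21 * g1 + g22 * g2) *: e2.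
have uf1 : mink u f1 = g1 by rewrite /u; ex; ring.
have uf2 : mink u f2 = g2 by rewrite /u; ex; ring.
have ue1 : mink u e1 = g11 * g1 + g12 * g2 by rewrite /u; ex; ring.
have ue2 : mink u e2 = g21 * g1 + g22 * g2 by rewrite /u; ex; ring.
have wf1 : mink w f1 = l * g1 by rewrite /w; ex; rewrite -q1; ring.
have wf2 : mink w f2 = l * g2 by rewrite /w; ex; rewrite -q2; ring.
have we1 : mink w e1 = g11 * g1 + g12 * g2 by rewrite /w; ex; ring.
have we2 : mink w e2 = g21 * g1 + g22 * g2 by rewrite /w; ex; ring.
have uu : mink u u = a by rewrite /u; ex; rewrite /a; ring.
have uw : mink u w = l * a.
  rewrite /u /w; ex; rewrite /a.
  transitivity (g1 * ((g11 ^+ 2 + g21 ^+ 2) * g1 + (g11 * g12 + g21 * g22) * g2) +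
     g2 * ((g11 * g12 + g21 * g22) * g1 + (g12 ^+ 2 + g22 ^+ 2) * g2)); first ring.
  rewrite q1 q2; ring.
have ww : mink w w = l * a.
  rewrite /w; ex; rewrite /a.
  transitivity (g1 * ((g11 ^+ 2 + g21 ^+ 2) * g1 + (g11 * g12 + g21 * g22) * g2) +
     g2 * ((g11 * g12 + g21 * g22) * g1 + (g12 ^+ 2 + g22 ^+ 2) * g2)); first ring.
  rewrite q1 q2; ring.
have pfu : pr f1 f2 u = u by rewrite /pr uf1 uf2.
have peu : pr e1 e2 u = w by rewrite /pr ue1 ue2.
have pew : pr e1 e2 w = w by rewrite /pr we1 we2.
have pfw : pr f1 f2 w = l *: u by rewrite /pr wf1 wf2 /u scalerDr !scalerA.
clearbody u w.
have TTu : TT u = 2 *: w - u.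
  rewrite /TT {2}/ht pfu htB htZ /ht peu.
  by apply/rowP => i; rewrite !mxE; ring.
have TTw : TT w = (4 * l - 1) *: w - (2 * l) *: u.
  rewrite /TT {2}/ht pfw htB htZ htZ /ht peu pew.
  by apply/rowP => i; rewrite !mxE; ring.
have eig : forall mu, l * mu ^+ 2 + 2 * l * mu + 1 = 0 ->
    TT (u + mu *: w) = (-1 - 2 * l * mu) *: (u + mu *: w).
  move=> mu hmu.
  rewrite TTD TTZ TTu TTw.
  apply/rowP => i; rewrite !mxE.
  apply/eqP; rewrite -subr_eq0; apply/eqP.
  transitivity ((2 * (l * mu ^+ 2 + 2 * l * mu + 1)) * w 0 i); last by rewrite hmu mulr0 mul0r.
  ring.
have nul : forall mu, l * mu ^+ 2 + 2 * l * mu + 1 = 0 -> mink (u + mu *: w) (u + mu *: w) = 0.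
  move=> mu hmu; rewrite !minkS uu uw ww (minkC w u) uw.
  transitivity (a * (l * mu ^+ 2 + 2 * l * mu + 1)); first ring.
  by rewrite hmu mulr0.
have l0 : 0 < l by lra.
have ln0 : l != 0 by rewrite gt_eqF.
set rho := Num.sqrt (l * (l - 1)).
have rho0 : 0 < rho by rewrite sqrtr_gt0; nra.
have rho2 : rho ^+ 2 = l * (l - 1) by rewrite sqr_sqrtr //; nra.
set mu1 := -1 + rho / l.
set mu2 := -1 - rho / l.
have hm1 : l * mu1 ^+ 2 + 2 * l * mu1 + 1 = 0.
  rewrite /mu1; apply: (mulIf ln0); rewrite mul0r.
  transitivity (rho ^+ 2 - l * (l - 1)); last by rewrite rho2 subrr.
  field; done.
have hm2 : l * mu2 ^+ 2 + 2 * l * mu2 + 1 = 0.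
  rewrite /mu2; apply: (mulIf ln0); rewrite mul0r.
  transitivity (rho ^+ 2 - l * (l - 1)); last by rewrite rho2 subrr.
  field; done.
set x1 := u + mu1 *: w.
set x2 := u + mu2 *: w.
set c1 := -1 - 2 * l * mu1.
set c2 := -1 - 2 * l * mu2.
have Tx1 : TT x1 = c1 *: x1 := eig _ hm1.
have Tx2 : TT x2 = c2 *: x2 := eig _ hm2.
have n1 : mink x1 x1 = 0 := nul _ hm1.
have n2 : mink x2 x2 = 0 := nul _ hm2.
have c1E : c1 = 2 * l - 1 - 2 * rho by rewrite /c1 /mu1; field.
have c2E : c2 = 2 * l - 1 + 2 * rho by rewrite /c2 /mu2; field.
have cc : c1 * c2 = 1 by rewrite c1E c2E; nra.
have c2p : 0 < c2 by rewrite c2E; lra.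
have c1p : 0 < c1.
  have : 0 < c1 * c2 by rewrite cc.
  by rewrite pmulr_lgt0.
have c12 : c1 != c2 by rewrite c1E c2E; apply/eqP => e; lra.
have c1n : c1 != 1.
  apply/eqP => e; move: cc; rewrite e mul1r => ee; move: c12; by rewrite e ee eqxx.
have sm : mu1 + mu2 = -2 by rewrite /mu1 /mu2; ring.
have pm : mu1 * mu2 * l = 1.
  transitivity (l - rho ^+ 2 / l); first by rewrite /mu1 /mu2; field.
  by rewrite rho2; field.
have n12 : mink x1 x2 < 0.
  rewrite /x1 /x2 !minkS uu uw ww (minkC w u) uw.
  have -> : a + mu2 * (l * a) + (mu1 * (l * a) + mu1 * (mu2 * (l * a))) = a * (1 + l * (mu1 + mu2) + mu1 * mu2 * l) by ring.
  rewrite sm pm; nra.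
have x1n : x1 != 0 by apply/eqP => e; move: n12; rewrite e mink0l ltxx.
have x2n : x2 != 0 by apply/eqP => e; move: n12; rewrite e mink0r ltxx.
have t1 : x1^^ord0 != 0 by apply: null_time => //; rewrite n1.
have t2 : x2^^ord0 != 0 by apply: null_time => //; rewrite n2.
clearbody x1 x2.
have IU : forall x, mink x x = 0 -> x^^ord0 != 0 -> Ideal ((x^^ord0)^-1 *: x).
  move=> x nx tx; split; first by rewrite !minkS nx !mulr0.
  by rewrite /Defs.coord mxE mulVf.
have FU : forall x c, TT x = c *: x -> 0 < c -> fixes_ideal TT ((x^^ord0)^-1 *: x).
  move=> x c Tx cp; exists c; split => //.
  by rewrite TTZ Tx !scalerA mulrC.
exists ((x1^^ord0)^-1 *: x1), ((x2^^ord0)^-1 *: x2).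
split; first exact: IU.
split; first exact: IU.
split.
  move=> e.
  have := congr1 TT e; rewrite !TTZ Tx1 Tx2 !scalerA (mulrC _ c1) (mulrC _ c2) -!scalerA -e.
  move/(congr1 (fun y => y^^ord0)); rewrite !mxE mulVf // !mulr1 => ee.
  by move: c12; rewrite ee eqxx.
split; first exact: (FU _ _ Tx1 c1p).
split; first exact: (FU _ _ Tx2 c2p).
move=> W IW [c [cp TW]].
exact: (uniq_gen TTD TTZ TTiso n1 n2 n12 Tx1 Tx2 cc c1p c1n IW TW cp).
Qed.
End Main.

Definition sgn (y : V) : R := if 0 < y^^ord0 then 1 else -1.
Definition nrm (y : V) : V := (sgn y * Num.sqrt (- mink y y))^-1 *: y.

Lemma nrm_prop y : mink y y < 0 ->
  [/\ Hyp (nrm y), (forall n, mink y n = 0 -> mink (nrm y) n = 0) & klein (nrm y) = klein y].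
Proof.
move=> hy.
have y0n := time_neq0 hy.
set q := Num.sqrt (- mink y y).
have q0 : 0 < q by rewrite sqrtr_gt0 oppr_gt0.
have q2 : q ^+ 2 = - mink y y by rewrite sqr_sqrtr // oppr_ge0 ltW.
have s2 : sgn y ^+ 2 = 1 by rewrite /sgn; case: ifP => _; rewrite ?expr1n ?sqrrN ?expr1n.
have sn : sgn y != 0 by rewrite /sgn; case: ifP => _; rewrite ?oner_eq0 ?oppr_eq0 ?oner_eq0.
have kn : sgn y * q != 0 by rewrite mulf_neq0 // gt_eqF.
split.
- split.
  + rewrite /nrm minkZl minkZr mulrA -expr2 exprVn exprMn s2 mul1r q2.
    have mn : mink y y != 0 by rewrite lt_eqF.
    by rewrite invrN mulNr mulVf.
  + rewrite /nrm /Defs.coord mxE /sgn; case: ifP => hp.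
    * by rewrite mul1r mulr_gt0 // invr_gt0.
    * have yn : y^^ord0 < 0 by rewrite lt_neqAle y0n /= leNgt hp.
      by rewrite mulN1r invrN mulNr -mulrN mulr_gt0 ?invr_gt0 // oppr_gt0.
- by move=> n hn; rewrite /nrm minkZl hn mulr0.
- rewrite /klein /nrm /Defs.coord mxE scalerA; congr (_ *: _).
  by rewrite invfM invrK mulrAC divff ?invr_eq0 // mul1r.
Qed.

Lemma hcl_self (P : V -> Prop) z : P z -> Hyp z -> hclosure P z.
Proof.
move=> Pz Hz; split; first by left.
by move=> eps ep; exists z; split => // i; rewrite subrr normr0.
Qed.

Lemma hcl_ideal (P : V -> Prop) e1 e2 h p :
  (forall x, P x <-> (Hyp x /\ mink x e1 = 0 /\ mink x e2 = 0)) -> P h -> Ideal p ->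
  mink p e1 = 0 -> mink p e2 = 0 -> hclosure P p.
Proof.
move=> hP Ph Ip pe1 pe2.
have [[hh h0] [he1 he2]] := (iffLR (hP h) Ph).
case: (Ip) => pp p0; rewrite /Defs.coord in p0 h0.
split; first by right.
move=> eps ep.
pose d := fun i => h^^i - h^^ord0 * p^^i.
pose M := \sum_(i < 5) `|d i|.
have M0 : 0 <= M by rewrite sumr_ge0.
pose T0 := h^^ord0 + (M + 1) / eps.
pose k := mink h p.
pose t := if k <= 0 then T0 else - T0.
have tk : t * k <= 0.
  rewrite /t; case: ifP => hk.
  - have : 0 < T0 by rewrite /T0 addr_gt0 // divr_gt0 // ltr_wpDl.
    nra.
  - have : 0 < T0 by rewrite /T0 addr_gt0 // divr_gt0 // ltr_wpDl.
    move/negbT: hk; rewrite -ltNge => hk; nra.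
pose y := h + t *: p.
have yy : mink y y < 0.
  rewrite /y !minkS hh pp (minkC p h) -/k; nra.
have [Hz Pz Kz] := nrm_prop yy.
exists (nrm y); split.
  apply/hP; split => //; split; apply: Pz; rewrite /y !minkS.
  - by rewrite he1 pe1 mulr0 addr0.
  - by rewrite he2 pe2 mulr0 addr0.
move=> i; rewrite Kz /klein /Defs.coord !mxE p0 invr1 mul1r.
have Mp : 0 < (M + 1) / eps by rewrite divr_gt0 // ltr_wpDl.
have bnd : (M + 1) / eps <= `|h^^ord0 + t * 1|.
  rewrite mulr1 /t; case: ifP => _.
  - rewrite /T0 ger0_norm; first lra.
    have : 0 < h^^ord0 + (h^^ord0 + (M + 1) / eps) by rewrite addr_gt0 // addr_gt0.
    by move/ltW.
  - rewrite /T0 opprD addrA subrr add0r normrN ger0_norm //; exact: ltW.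
have yn : h^^ord0 + t * 1 != 0.
  apply/eqP => e; move: bnd; rewrite e normr0; lra.
rewrite (_ : _ - _ = d i / (h^^ord0 + t * 1)); last first.
  rewrite /d; field. by rewrite mulr1 in yn.
rewrite normrM normfV ltr_pdivrMr ?normr_gt0 //.
have di : `|d i| <= M by rewrite /M (bigD1 i) //= ler_wpDr ?sumr_ge0.
have : M + 1 <= eps * `|h^^ord0 + t * 1|.
  by rewrite -ler_pdivrMl // mulrC.
lra.
Qed.

Lemma noL_of (P Q : V -> Prop) e1 e2 f1 f2 h h' :
 ultra_parallel P Q ->
 (forall x, P x <-> (Hyp x /\ mink x e1 = 0 /\ mink x e2 = 0)) ->
 (forall x, Q x <-> (Hyp x /\ mink x f1 = 0 /\ mink x f2 = 0)) ->
 P h -> Q h' ->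
 forall v, mink v e1 = 0 -> mink v e2 = 0 -> mink v f1 = 0 -> mink v f2 = 0 ->
   mink v v <= 0 -> v = 0.
Proof.
move=> up hP hQ Ph Qh' v ve1 ve2 vf1 vf2 vv.
have [vlt|vge] := ltP (mink v v) 0.
  exfalso; have [Hz Pz Kz] := nrm_prop vlt.
  apply: (up (nrm v)); split; apply: hcl_self => //.
  - by apply/hP; split => //; split; apply: Pz.
  - by apply/hQ; split => //; split; apply: Pz.
have v0 : mink v v = 0 by apply/eqP; rewrite eq_le vv vge.
apply/eqP; apply: contraT => vn; exfalso.
have t0 := null_time vv vn.
pose p := (v^^ord0)^-1 *: v.
have Ip : Ideal p.
  split; first by rewrite /p minkZl minkZr v0 !mulr0.
  by rewrite /p /Defs.coord mxE mulVf.
have pz : forall n, mink v n = 0 -> mink p n = 0 by move=> n hn; rewrite /p minkZl hn mulr0.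
apply: (up p); split.
- exact: (hcl_ideal hP Ph Ip (pz _ ve1) (pz _ ve2)).
- exact: (hcl_ideal hQ Qh' Ip (pz _ vf1) (pz _ vf2)).
Qed.

Lemma hyp_ext (f g : V -> V) : (forall x, f x = g x) -> hyperbolic_isom g -> hyperbolic_isom f.
Proof.
move=> fg [nf [u [v [Iu [Iv [uv [fu [fv un]]]]]]]].
split; first by move=> x hx; rewrite fg; exact: nf.
exists u, v; do 3 (split => //).
split; first by case: fu => c [cp e]; exists c; rewrite fg.
split; first by case: fv => c [cp e]; exists c; rewrite fg.
move=> w Iw [c [cp e]]; apply: un => //; exists c; by rewrite -fg.
Qed.
End S.
End Aux.
Import Aux.
Unset Implicit Arguments.

Theorem lemma6p3 (R : realType) (P Q : 'rV[R]_5 -> Prop) (HP HQ : 'rV[R]_5 -> 'rV[R]_5) :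
  is_plane P -> is_plane Q -> ultra_parallel P Q ->
  half_turn P HP -> half_turn Q HQ ->
  hyperbolic_isom (fun x => HP (HQ x)).
Proof.
move=> [WP [_ [_ [h Ph]]]] [WQ [_ [_ [h' Qh']]]] up htP htQ.
have [e1 [e2 [he1 he2 he12 hP hPf]]] := half_turn_norm htP.
have [f1 [f2 [hf1 hf2 hf12 hQ hQf]]] := half_turn_norm htQ.
have [[hh _] [hh1 hh2]] := iffLR (hP h) Ph.
have noL := noL_of up hP hQ Ph Qh'.
have H := main_hyp he1 he2 he12 hf1 hf2 hf12 hh hh1 hh2 noL.
apply: (hyp_ext _ H) => x.
by rewrite /TT hPf hQf.
Qed.
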